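(* Let $n,m\in\mathbb{N}$ with $n\geq 3$ and $1\le m\leq \frac{n}{2}$. Then the Johnson graph $J(n,m)$ is panconnected.
   Context: For $n,m\in\mathbb{N}$ with $m<n$, the Johnson graph $J(n,m)$ is the simple graph whose vertex set is the set of all $m$-element subsets of $[n]=\{1,\dots,n\}$, two vertices $v,w$ being adjacent if and only if $|v\cap w|=m-1$. A graph $G$ of order $N>2$ is panconnected if for every two distinct vertices $u,v$ and every integer $l$ with $d(u,v)\le l\le N-1$ there is a $u$-$v$ path of length $l$ in $G$ (here $d$ is the graph distance and the length of a path is its number of edges). *)

(* Defs.v *)
From mathcomp Require Import all_boot.
Set Implicit Arguments. Unset Strict Implicit. Unset Printing Implicit Defensive.

Definition johnson_vertex (n m : nat) : finType :=
  {A : {set 'I_n} | #|A| == m}.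

Definition johnson_adj (n m : nat) : rel (johnson_vertex n m) :=
  fun v w => #|val v :&: val w| == m - 1.

(* A u-v path in graph e: vertices u = x_0, x_1, ..., x_l = v, pairwise
   distinct, consecutive ones adjacent.  The path is u :: p, its length is
   size p (number of edges). *)
Definition is_upath (T : finType) (e : rel T) (u v : T) (p : seq T) : Prop :=
  [/\ path e u p, last u p = v & uniq (u :: p)].

Definition is_dist (T : finType) (e : rel T) (u v : T) (d : nat) : Prop :=
  (exists p, is_upath e u v p /\ size p = d) /\
  (forall p, is_upath e u v p -> d <= size p).

Definition panconnected (T : finType) (e : rel T) : Prop :=
  2 < #|T| /\
  forall u v : T, u != v -> forall d : nat, is_dist e u v d ->
  forall l : nat, d <= l <= #|T| - 1 ->
  exists p : seq T, is_upath e u v p /\ size p = l.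

(* Main.v *)
Require Import Defs.
From mathcomp Require Import all_boot zify.
Set Implicit Arguments. Unset Strict Implicit. Unset Printing Implicit Defensive.

Section Gen.
Variable T : finType.
Implicit Types (A B F X : {set T}) (a b x y : T).

Definition VV F X (m : nat) : {set {set T}} :=
  [set A : {set T} | [&& F \subset A, A \subset X & #|A| == m]].
Definition jadj : rel {set T} := fun A B => #|A :\: B| == 1.
Definition swap A a b : {set T} := b |: (A :\ a).

Lemma inVV F X m A : (A \in VV F X m) = [&& F \subset A, A \subset X & #|A| == m].
Proof. by rewrite inE. Qed.

Lemma inswap A a b y : (y \in swap A a b) = (y == b) || ((y != a) && (y \in A)).
Proof. by rewrite !inE. Qed.

Lemma card_swap A a b : a \in A -> b \notin A -> #|swap A a b| = #|A|.
Proof.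
move=> aA bA; by rewrite cardsU1 (cardsD1 a A) aA !inE (negbTE bA) andbF.
Qed.

Lemma swapD_self A a b : a \in A -> b \notin A -> A :\: swap A a b = [set a].
Proof.
move=> aA bA; apply/setP=> y; rewrite !inE.
case: (eqVneq y a) => [->|ya] /=; first by rewrite aA; case: eqP => // ab; rewrite -ab aA in bA.
by case: (eqVneq y b) => [->|yb] /=; case: (y \in A).
Qed.

Lemma jadj_swap A a b : a \in A -> b \notin A -> jadj A (swap A a b).
Proof. by move=> aA bA; rewrite /jadj swapD_self // cards1. Qed.

Lemma swap_inVV F X m A a b : A \in VV F X m -> a \in A -> a \notin F -> b \in X -> b \notin A ->
  swap A a b \in VV F X m.
Proof.
rewrite !inVV => /and3P[FA AX /eqP cA] aA aF bX bA.
rewrite card_swap // cA eqxx andbT; apply/andP; split.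
  apply/subsetP=> y yF; rewrite inswap (subsetP FA) // andbT.
  by apply/orP; right; apply: contraNneq aF => <-.
apply/subsetP=> y; rewrite inswap => /orP[/eqP->//|/andP[_ yA]].
exact: (subsetP AX).
Qed.

Lemma card_swapD1 A B a b : a \in A -> a \notin B -> b \in B ->
  #|swap A a b :\: B| = #|A :\: B| - 1.
Proof.
move=> aA aB bB.
have -> : swap A a b :\: B = (A :\: B) :\ a.
  apply/setP=> y; rewrite !inE; case: (eqVneq y b) => [->|] /=; first by rewrite bB /= !andbF.
  by move=> _; case: (y != a); case: (y \notin B).
by rewrite (cardsD1 a (A :\: B)) !inE aA aB; lia.
Qed.

Lemma card_swapD2 A B a b : a \in A -> a \notin B -> b \notin B -> b \notin A ->
  #|swap A a b :\: B| = #|A :\: B|.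
Proof.
move=> aA aB bB bA.
have -> : swap A a b :\: B = b |: ((A :\: B) :\ a).
  apply/setP=> y; rewrite !inE; case: (eqVneq y b) => [->|] /=.
    by rewrite (negbTE bB) /=; case: (eqVneq b a) => // ba; rewrite ba aA in bA.
  by move=> _; case: (y != a); case: (y \notin B).
rewrite cardsU1 [#|A :\: B|](cardsD1 a) !inE aA aB (negbTE bA) !andbF /=; lia.
Qed.


Lemma VV0 F X m x A : (A \in VV F (X :\ x) m) = (A \in VV F X m) && (x \notin A).
Proof. by rewrite !inVV subsetD1; case: (F \subset A); case: (A \subset X); case: (#|A| == m); case: (x \in A). Qed.

Lemma VV1 F X m x A : (A \in VV (x |: F) X m) = (A \in VV F X m) && (x \in A).
Proof. by rewrite !inVV subUset sub1set; case: (F \subset A); case: (A \subset X); case: (#|A| == m); case: (x \in A). Qed.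

Lemma card_VV F X m x : #|VV F X m| = #|VV (x |: F) X m| + #|VV F (X :\ x) m|.
Proof.
rewrite -(cardsID [set A : {set T} | x \in A] (VV F X m)); congr (_ + _); apply: eq_card => A.
  by rewrite VV1 in_setI in_set.
by rewrite VV0 in_setD in_set andbC.
Qed.

Lemma cardD_sym A B : #|A| = #|B| -> #|B :\: A| = #|A :\: B|.
Proof. by move=> e; move: (cardsID A B) (cardsID B A); rewrite setIC; lia. Qed.

Lemma cardD_gt0 A B : #|A| = #|B| -> A != B -> 0 < #|A :\: B|.
Proof.
move=> e; apply: contraNT; rewrite -leqNgt leqn0 cards_eq0 setD_eq0 => AB.
by rewrite eqEcard AB e leqnn.
Qed.


Lemma VV_bound F X m u v : u \in VV F X m -> v \in VV F X m -> u != v ->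
  #|u :\: v| < #|VV F X m|.
Proof.
move=> uV vV uv.
move: (uV) (vV); rewrite !inVV => /and3P[Fu uX /eqP cu] /and3P[Fv vX /eqP cv].
have : 0 < #|v :\: u| by apply: cardD_gt0; [rewrite cu cv | rewrite eq_sym].
case/card_gt0P=> t0; rewrite inE => /andP[t0u t0v].
pose f s := swap u s t0.
have inj : {in u :\: v &, injective f}.
  move=> s1 s2; rewrite !inE => /andP[_ s1u] /andP[_ s2u] e.
  apply/eqP; apply: contraT => ne.
  have : s1 \in f s2 by rewrite inswap ne s1u orbT.
  rewrite -e inswap eqxx /= orbF => /eqP s1t; by rewrite -s1t s1u in t0u.
have sub : u |: (f @: (u :\: v)) \subset VV F X m.
  apply/subsetP=> A; rewrite in_setU1 => /orP[/eqP->//|/imsetP[s]].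
  rewrite inE => /andP[sv su] ->; apply: swap_inVV => //; last by apply: (subsetP vX).
  by apply: contra sv; apply: (subsetP Fv).
have uI : u \notin f @: (u :\: v).
  apply/imsetP=> -[s _ e]; have : t0 \in f s by rewrite inswap eqxx.
  by rewrite -e (negbTE t0u).
apply: leq_trans (subset_leq_card sub); rewrite cardsU1 uI card_in_imset //.
Qed.

End Gen.

Lemma glue (T : finType) (e : rel T) (P1 P0 : pred T) u w w' v p1 p0 :
  is_upath e u w p1 -> all P1 (u :: p1) -> is_upath e w' v p0 -> all P0 (w' :: p0) ->
  e w w' -> (forall z, P1 z -> ~~ P0 z) -> is_upath e u v (p1 ++ w' :: p0).
Proof.
case=> pa la ua A1 [pb lb ub] A0 ew dis; split.
- by rewrite cat_path pa la /= ew pb.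
- by rewrite last_cat la /= lb.
- rewrite -cat_cons cat_uniq ua ub andbT; apply/hasPn => z zin; apply/negP => zin2.
  by have := dis z (allP A1 z zin2); rewrite (allP A0 z zin).
Qed.

Lemma lower (T : finType) (u : {set T}) p :
  path (fun a b : {set T} => #|a :\: b| <= 1) u p -> #|u :\: last u p| <= size p.
Proof.
elim: p u => [|b p IH] u /=; first by rewrite setDv cards0.
case/andP=> ub pb; have := IH b pb.
have sub : u :\: last b p \subset (u :\: b) :|: (b :\: last b p).
  apply/subsetP=> y; rewrite !inE; case: (y \in b); by case: (y \in u); case: (y \in last b p).
have := subset_leq_card sub; have := leq_card_setU (u :\: b) (b :\: last b p).
case=> h _; move: ub; lia.
Qed.

Lemma swap_swap (T : finType) (A : {set T}) a x b : a \in A -> x \in A -> a != x -> b \notin A ->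
  swap (swap A a b) x a = swap A x b.
Proof.
move=> aA xA ax bA; apply/setP=> y; rewrite !inswap.
case: (eqVneq y a) => [->|ya] /=.
  by rewrite aA ax orbT.
case: (eqVneq y b) => [->|yb] /=; last by rewrite andbC.
by case: eqP => // bx; rewrite bx xA in bA.
Qed.

Definition Qp (T : finType) (F X : {set T}) m :=
  forall u v, u \in VV F X m -> v \in VV F X m -> u != v ->
  forall l, #|u :\: v| <= l <= #|VV F X m| - 1 ->
  exists p, [/\ is_upath (@jadj T) u v p, size p = l & all (fun z => z \in VV F X m) p].

Lemma mainQ (T : finType) r : forall (F X : {set T}) m, #|X :\: F| < r -> Qp F X m.
Proof.
elim: r => [|r IH] F X m hr u v uV vV uv l hl; first by [].
move: (uV) (vV); rewrite !inVV => /and3P[Fu uX /eqP cu] /and3P[Fv vX /eqP cv].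
have : 0 < #|u :\: v| by apply: cardD_gt0; rewrite ?cu ?cv.
move=> j0; have := j0; case/card_gt0P=> x; rewrite inE => /andP[xv xu].
have xX : x \in X by apply: (subsetP uX).
have xF : x \notin F by apply: contra xv; apply: (subsetP Fv).
set V := VV F X m; set V1 := VV (x |: F) X m; set V0 := VV F (X :\ x) m.
have cV : #|V| = #|V1| + #|V0| by apply: card_VV.
have xXF : x \in X :\: F by rewrite inE xF xX.
have r1 : #|X :\: (x |: F)| < r.
  have -> : X :\: (x |: F) = (X :\: F) :\ x.
    by apply/setP=> y; rewrite !inE; case: (y == x); case: (y \in F).
  by move: hr; rewrite [#|X :\: F|](cardsD1 x) xXF.
have r0 : #|(X :\ x) :\: F| < r.
  have -> : (X :\ x) :\: F = (X :\: F) :\ x.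
    by apply/setP=> y; rewrite !inE; case: (y == x); case: (y \in F).
  by move: hr; rewrite [#|X :\: F|](cardsD1 x) xXF.
have IH1 := IH _ _ m r1; have IH0 := IH _ _ m r0.
have u1 : u \in V1 by rewrite VV1 uV.
have v0 : v \in V0 by rewrite VV0 vV.
have dis : forall z, z \in V1 -> z \notin V0.
  by move=> z; rewrite VV1 VV0 => /andP[_ ->]; rewrite andbF.
have V1V : forall z, z \in V1 -> z \in V by move=> z; rewrite VV1 => /andP[].
have V0V : forall z, z \in V0 -> z \in V by move=> z; rewrite VV0 => /andP[].
have w'V0 : forall b, b \in X -> b \notin u -> swap u x b \in V0.
  move=> b bX bu; rewrite VV0 swap_inVV // inswap eqxx /= orbF.
  by apply: contra bu => /eqP <-.
have PA : forall w', w' \in V0 -> jadj u w' -> w' != v -> #|w' :\: v| <= l.-1 ->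
    l <= #|V0| -> exists p, [/\ is_upath (@jadj T) u v p, size p = l & all (fun z => z \in V) p].
  move=> w' w'0 uw' w'v hw' lV0.
  have l1 : 1 <= l by move: hl j0; clear; lia.
  have [|p0 [pp sp ap]] := IH0 w' v w'0 v0 w'v l.-1; first by rewrite hw' /= -subn1 leq_sub2r.
  exists ([::] ++ w' :: p0); split.
  - apply: (@glue _ (@jadj T) (fun z => z \in V1) (fun z => z \in V0) u u w' v [::] p0).
    + by split => //=; rewrite andbT.
    + by rewrite /= u1.
    + exact: pp.
    + by rewrite /= w'0.
    + exact: uw'.
    + exact: dis.
  - by rewrite /= sp; move: l1; clear; lia.
  - rewrite /= V0V //=; apply/allP=> z zp; apply: V0V; exact: (allP ap).
have PB : forall b, b \in X -> b \notin u -> (swap u x b = v -> #|V0| <= 1) -> #|V0| < l ->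
    exists p, [/\ is_upath (@jadj T) u v p, size p = l & all (fun z => z \in V) p].
  move=> b bX bu hv lV0.
  have hlV : l <= #|V1| + #|V0| - 1 by move: hl; rewrite -cV => /andP[_ h]; exact: h.
  have V1gt : 1 < #|V1| by move: hlV lV0; clear; lia.
  have : 0 < #|V1 :\ u| by move: V1gt; rewrite (cardsD1 u V1) u1; clear; lia.
  case/card_gt0P=> z; rewrite in_setD1 => /andP[zu z1].
  have : 0 < #|u :\: z|.
    apply: cardD_gt0; last by rewrite eq_sym.
    by move: z1; rewrite inVV => /and3P[_ _ /eqP ->].
  case/card_gt0P=> a; rewrite in_setD => /andP[az au].
  have xFz : x |: F \subset z by move: z1; rewrite inVV => /and3P[].
  have aF : a \notin F by apply: contra az => aF; apply: (subsetP xFz); rewrite !inE aF orbT.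
  have ax : a != x by apply: contra az => /eqP ->; apply: (subsetP xFz); rewrite !inE eqxx.
  set w := swap u a b; set w' := swap u x b.
  have w1 : w \in V1 by rewrite VV1 swap_inVV // inswap (eq_sym x a) ax xu orbT.
  have uw : jadj u w by apply: jadj_swap.
  have wu : u != w.
    apply/eqP=> e; have : b \in w by rewrite inswap eqxx.
    by rewrite -e (negbTE bu).
  have ww' : jadj w w'.
    rewrite /w' -(swap_swap au xu ax bu); apply: jadj_swap.
      by rewrite inswap (eq_sym x a) ax xu orbT.
    rewrite inswap eqxx /= orbF; apply/eqP=> ab; by rewrite ab (negbTE bu) in au.
  have [|p1 [pp1 sp1 ap1]] := IH1 u w u1 w1 wu (l - #|V0|).
    move: uw; rewrite /jadj -/V1 => /eqP ->; move: hlV lV0; clear; lia.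
  have V0gt : 0 < #|V0| by apply/card_gt0P; exists v.
  have [p0 [pp0 sp0 ap0]] : exists p0, [/\ is_upath (@jadj T) w' v p0, size p0 = #|V0| - 1
      & all (fun z => z \in V0) p0].
    case: (eqVneq w' v) => [e|ne].
      exists [::]; split; [by split => //=; rewrite ?andbT| |by []].
      by have := hv e; move: V0gt; rewrite /=; clear; lia.
    have w'0 : w' \in V0 by apply: w'V0.
    have [|p0 H] := IH0 w' v w'0 v0 ne (#|V0| - 1); last by exists p0.
    rewrite leqnn andbT -ltnS; apply: leq_trans (VV_bound w'0 v0 ne) _; move: V0gt; rewrite -/V0; clear; lia.
  exists (p1 ++ w' :: p0); split.
  - apply: (@glue _ (@jadj T) (fun z => z \in V1) (fun z => z \in V0) u w w' v p1 p0).
    + exact: pp1.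
    + by rewrite /= u1.
    + exact: pp0.
    + by rewrite /= w'V0.
    + exact: ww'.
    + exact: dis.
  - by rewrite size_cat /= sp1 sp0; move: V0gt lV0; clear; lia.
  - rewrite all_cat /= V0V ?w'V0 //; apply/andP; split; apply/allP=> y yp.
      by apply: V1V; exact: (allP ap1).
    by apply: V0V; exact: (allP ap0).
have jv : #|v :\: u| = #|u :\: v| by apply: cardD_sym; rewrite cu cv.
have jl : #|u :\: v| <= l by case/andP: hl.
case: (ltnP 1 #|u :\: v|) => [j2|j1].
  have : 0 < #|v :\: u| by rewrite jv ltnW.
  case/card_gt0P=> b; rewrite in_setD => /andP[bu bv].
  have bX : b \in X by apply: (subsetP vX).
  have w'0 := w'V0 b bX bu.
  have hw : #|swap u x b :\: v| = #|u :\: v| - 1 by apply: card_swapD1.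
  have ne : swap u x b != v.
    by apply/eqP => e; move: hw j2; rewrite e setDv cards0; clear; lia.
  case: (leqP l #|V0|) => lV0.
    apply: (PA _ w'0 (jadj_swap xu bu) ne) => //.
    by rewrite hw; move: jl; clear; lia.
  by apply: (PB b bX bu) => // e; rewrite e eqxx in ne.
have j1' : #|u :\: v| = 1 by move: j0 j1; clear; lia.
case: (eqVneq l 1) => [->|l1].
  exists [:: v]; split => //=; last by rewrite vV.
  by split => //=; rewrite ?andbT /jadj ?j1' // inE.
have l2 : 1 < l by move: jl l1; rewrite j1'; clear; lia.
case: (leqP #|V0| 1) => V0le.
  have : 0 < #|v :\: u| by rewrite jv j1'.
  case/card_gt0P=> b; rewrite in_setD => /andP[bu bv].
  have bX : b \in X by apply: (subsetP vX).
  by apply: (PB b bX bu) => //; apply: leq_ltn_trans V0le l2.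
have : 0 < #|V0 :\ v| by move: V0le; rewrite (cardsD1 v V0) v0; clear; lia.
case/card_gt0P=> z0; rewrite in_setD1 => /andP[z0v z00].
have : 0 < #|z0 :\: v|.
  apply: cardD_gt0 => //.
  by move: z00; rewrite inVV => /and3P[_ _ /eqP ->].
case/card_gt0P=> b; rewrite in_setD => /andP[bv bz0].
have bXx : b \in X :\ x by move: z00; rewrite inVV => /and3P[_ /subsetP zX _]; apply: zX.
have bX : b \in X by move: bXx; rewrite in_setD1 => /andP[].
have bx : b != x by move: bXx; rewrite in_setD1 => /andP[].
have bu : b \notin u.
  apply/negP=> bu; have /cards1P[c uvc] : #|u :\: v| == 1 by rewrite j1'.
  have : x \in u :\: v by rewrite in_setD xu xv.
  have : b \in u :\: v by rewrite in_setD bu bv.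
  by rewrite uvc !inE => /eqP bc /eqP xc; rewrite bc xc eqxx in bx.
have w'0 := w'V0 b bX bu.
have hw : #|swap u x b :\: v| = 1 by rewrite card_swapD2.
have ne : swap u x b != v.
  apply/eqP => e; have : b \in swap u x b by rewrite inswap eqxx.
  by rewrite e (negbTE bv).
case: (leqP l #|V0|) => lV0.
  apply: (PA _ w'0 (jadj_swap xu bu) ne) => //.
  by rewrite hw; move: l2; clear; lia.
by apply: (PB b bX bu) => // e; rewrite e eqxx in ne.
Qed.

Lemma bin_ge n k : 1 <= k < n -> n <= 'C(n, k).
Proof.
elim: n k => [|n IH] k //; case: k => [|k] //= kn.
case: k kn => [|k] kn; first by rewrite bin1.
rewrite binS; have := IH k.+1; rewrite /= -ltnS kn => /(_ isT) h.
have : 0 < 'C(n, k.+2) by rewrite bin_gt0.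
move: h; clear; lia.
Qed.

Lemma card_jv n m : #|johnson_vertex n m| = #|VV (set0 : {set 'I_n}) setT m|.
Proof.
rewrite /johnson_vertex card_sig; apply: eq_card => A.
by rewrite inVV sub0set subsetT inE.
Qed.

Theorem theorem3p6 (n m : nat) (hn : 3 <= n) (hm1 : 1 <= m) (hm2 : m.*2 <= n) :
  panconnected (@johnson_adj n m).
Proof.
split.
  rewrite /johnson_vertex card_sig.
  have -> : #|[pred x : {set 'I_n} | #|x| == m]| = #|[set A : {set 'I_n} | #|A| == m]|.
    by apply: eq_card => A; rewrite !inE.
  rewrite card_draws card_ord; apply: leq_trans (bin_ge _).
    by apply: leq_trans hn.
  by rewrite hm1 /=; move: hm2 hm1; clear; lia.
move=> u v uv d [[p0 [hp0 sp0]] hmin] l hl.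
set V := VV (set0 : {set 'I_n}) setT m.
have inV : forall w : johnson_vertex n m, val w \in V.
  by move=> w; rewrite inVV sub0set subsetT; exact: (valP w).
have dl : #|val u :\: val v| <= d.
  case: hp0 => pp lp _; rewrite -sp0 -(size_map val).
  have -> : val v = last (val u) (map val p0) by rewrite last_map lp.
  apply: lower; rewrite path_map.
  apply: sub_path pp => a b /= /eqP hab; change (#|val a :\: val b| <= 1).
  move: (cardsID (val b) (val a)); rewrite hab (eqP (valP a)); move: hm1; clear; lia.
have uv' : val u != val v by apply: contra uv => /eqP /val_inj ->.
have [|p [[pp lp up] sp ap]] := @mainQ _ (#|setT :\: (set0 : {set 'I_n})|).+1 set0 setT m
    (leqnn _) (val u) (val v) (inV u) (inV v) uv' l.
  by rewrite -card_jv; case/andP: hl => h1 h2; rewrite h2 andbT (leq_trans dl h1).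
pose q := map (insubd u) p.
have mq : map val q = p.
  rewrite -map_comp; apply: map_id_in => A Ap /=; apply: insubdK.
  by move: (allP ap A Ap); rewrite inVV => /and3P[].
exists q; split; last by rewrite size_map.
split.
- change (path (relpre val (fun A B : {set 'I_n} => #|A :&: B| == m - 1)) u q).
  rewrite -path_map mq.
  apply: (sub_in_path (P := fun z => z \in V) _ _ pp); last by rewrite /= inV ap.
  move=> A B; rewrite !inVV => /and3P[_ _ /eqP cA] /and3P[_ _ /eqP cB] /eqP hAB.
  by move: (cardsID B A); rewrite hAB cA; move: hm1; clear; lia.
- by apply: val_inj; rewrite -last_map mq.
- by rewrite -(map_inj_uniq val_inj) /= mq.
Qed.
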